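(* Let $|\psi\rangle,|\phi\rangle\in\mathcal{H}'$ be pure states with $\mathcal{C}(|\phi\rangle)>\mathcal{C}(|\psi\rangle)$. Then the maximum probability of transforming $|\psi\rangle$ into $|\phi\rangle$ using Z$_2$-invariant operations is $$P(|\psi\rangle\to|\phi\rangle)=\frac{\mathcal{C}(|\psi\rangle)}{\mathcal{C}(|\phi\rangle)}.$$
   Context: $\mathcal{H}'$ is a two-dimensional Hilbert space with orthonormal basis $|0\rangle,|1\rangle$; $\pi=|0\rangle\langle0|-|1\rangle\langle1|$. A Z$_2$-invariant operation is a completely positive, trace-nonincreasing linear map $\mathcal{E}$ on operators on $\mathcal{H}'$ with $\mathcal{E}(\pi X\pi)=\pi\mathcal{E}(X)\pi$ for all $X$. The probability of transforming $|\psi\rangle$ into $|\phi\rangle$ is the largest $\lambda$ such that some Z$_2$-invariant operation $\mathcal{E}$ satisfies $\mathcal{E}(|\psi\rangle\langle\psi|)=\lambda|\phi\rangle\langle\phi|$. For a pure state $|\chi\rangle$, $\mathcal{C}(|\chi\rangle)=2\min\{|\langle0|\chi\rangle|^2,|\langle1|\chi\rangle|^2\}$. *)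

(* Defs.v *)
(* complex numbers R[i] over a real closed field R
   (mathcomp-real-closed); operators on H' = C^2 are 2x2 matrices. *)
From HB Require Import structures.
From mathcomp Require Import all_boot all_order all_algebra.
From mathcomp Require Import complex.
Import ComplexField.Normc.
Set Implicit Arguments. Unset Strict Implicit. Unset Printing Implicit Defensive.
Import Order.TTheory GRing.Theory Num.Theory.
Local Open Scope ring_scope.
Local Open Scope complex_scope.

Section QDefs.
Variable R : rcfType.
Local Notation C := R[i].

Definition psdF (T : finType) (X : T -> T -> C) : Prop :=
  forall v : T -> C, 0 <= \sum_(i : T) \sum_(j : T) (v i)^* * X i j * v j.

Definition psd (X : 'M[C]_2) : Prop := psdF (fun i j => X i j).

(* (id_n (x) E) applied to an operator on C^n (x) C^2, seen as a function
   of pairs of indices (a, k) with a : 'I_n, k : 'I_2 *)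
Definition ampl (n : nat) (E : 'M[C]_2 -> 'M[C]_2)
    (X : ('I_n * 'I_2)%type -> ('I_n * 'I_2)%type -> C) :
    ('I_n * 'I_2)%type -> ('I_n * 'I_2)%type -> C :=
  fun p q => E (\matrix_(k, l) X (p.1, k) (q.1, l)) p.2 q.2.

Definition completely_positive (E : 'M[C]_2 -> 'M[C]_2) : Prop :=
  forall (n : nat) (X : ('I_n * 'I_2)%type -> ('I_n * 'I_2)%type -> C),
    psdF X -> psdF (ampl E X).

Definition trace_nonincreasing (E : 'M[C]_2 -> 'M[C]_2) : Prop :=
  forall X : 'M[C]_2, psd X -> \tr (E X) <= \tr X.

Definition piZ2 : 'M[C]_2 := \matrix_(i, j) (if i == j then
                                (if i == 0 then 1 else -1) else 0).

Definition Z2_invariant (E : 'M[C]_2 -> 'M[C]_2) : Prop :=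
  forall X : 'M[C]_2, E (piZ2 *m X *m piZ2) = piZ2 *m E X *m piZ2.

Definition Z2_operation (E : {linear 'M[C]_2 -> 'M[C]_2}) : Prop :=
  [/\ completely_positive E, trace_nonincreasing E & Z2_invariant E].

Definition pure_state (psi : 'cV[C]_2) : Prop :=
  normc (psi 0 0) ^+ 2 + normc (psi 1 0) ^+ 2 = 1.

Definition proj (psi : 'cV[C]_2) : 'M[C]_2 := psi *m (map_mx conjc psi)^T.

Definition coh (chi : 'cV[C]_2) : R :=
  2 * Num.min (normc (chi 0 0) ^+ 2) (normc (chi 1 0) ^+ 2).

Definition achievable (psi phi : 'cV[C]_2) (lam : R) : Prop :=
  exists E : {linear 'M[C]_2 -> 'M[C]_2},
    Z2_operation E /\ E (proj psi) = lam%:C *: proj phi.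

Definition is_max_prob (psi phi : 'cV[C]_2) (p : R) : Prop :=
  achievable psi phi p /\ forall lam, achievable psi phi lam -> lam <= p.

End QDefs.

(* Main.v *)
Require Import Defs.
From HB Require Import structures.
From mathcomp Require Import all_boot all_order all_algebra.
From mathcomp Require Import complex ring lra.
Import Order.TTheory GRing.Theory Num.Theory.
Import ComplexField.Normc.
Set Implicit Arguments. Unset Strict Implicit. Unset Printing Implicit Defensive.
Local Open Scope ring_scope.
Local Open Scope complex_scope.
Section S.
Variable R : rcfType.
Local Notation C := R[i].
Lemma sum2 (V : zmodType) (F : 'I_2 -> V) : \sum_(i < 2) F i = F 0 + F 1.
Proof. rewrite !big_ord_recl big_ord0 addr0. congr (_ + F _); exact: val_inj. Qed.
Lemma sum_pair (I J : finType) (G : (I*J)%type -> C) :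
  \sum_p G p = \sum_i \sum_j G (i,j).
Proof. rewrite pair_big /=. by apply eq_bigr => [[i j]] _. Qed.
Lemma dsum (n : nat) (F : ('I_n * 'I_2)%type -> ('I_n * 'I_2)%type -> C) :
  \sum_p \sum_q F p q = \sum_a \sum_b \sum_(i < 2) \sum_(j < 2) F (a,i) (b,j).
Proof.
rewrite sum_pair. apply eq_bigr => a _.
under eq_bigr => i _ do rewrite sum_pair.
by rewrite exchange_big.
Qed.
Lemma cjD (x y : C) : conjc (x + y) = conjc x + conjc y.
Proof. exact: raddfD. Qed.
Lemma cjM (x y : C) : conjc (x * y) = conjc x * conjc y.
Proof. exact: rmorphM. Qed.
Lemma ncE (x : C) : Num.conj x = conjc x.
Proof. by []. Qed.
Lemma psdFE (T : finType) (X : T -> T -> C) : psdF X =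
  (forall v : T -> C, 0 <= \sum_(i : T) \sum_(j : T) conjc (v i) * X i j * v j).
Proof. by []. Qed.
Definition kraus (K : 'M[C]_2) (X : 'M[C]_2) : 'M[C]_2 :=
  K *m X *m (map_mx conjc K)^T.
Lemma kraus_cp K : completely_positive (kraus K).
Proof.
move=> n X; rewrite !psdFE => HX v.
pose w := fun p : ('I_n * 'I_2)%type => \sum_(j < 2) conjc (K j p.2) * v (p.1, j).
have := HX w. congr (_ <= _).
rewrite !dsum. apply eq_bigr => a _. apply eq_bigr => b _.
rewrite /ampl /w /kraus /=.
rewrite !sum2 !mxE !sum2 !mxE !sum2 !mxE /=.
rewrite ?ncE ?cjD ?cjM ?conjcK.
ring.
Qed.

Lemma mulcJn (z : C) : z * conjc z = (normc z ^+ 2)%:C.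
Proof.
case: z => a b /=. rewrite sqr_sqrtr ?addr_ge0 ?sqr_ge0 //.
simpc. by rewrite [b*a]mulrC addNr !expr2.
Qed.
Lemma ord2 (i : 'I_2) : i = 0 \/ i = 1.
Proof. case: i => [[|[|//]] Hi]; [left|right]; exact: val_inj. Qed.

Lemma kraus_is_linear K : linear (kraus K).
Proof. move=> a X Y. by rewrite /kraus mulmxDr mulmxDl -scalemxAr -scalemxAl. Qed.
HB.instance Definition _ K := GRing.isLinear.Build C 'M[C]_2 'M[C]_2 *:%R (kraus K) (kraus_is_linear K).

Definition Kd (k0 k1 : C) : 'M[C]_2 := \matrix_(i,j) if i == j then (if i == 0 then k0 else k1) else 0.
Definition Ka (k0 k1 : C) : 'M[C]_2 := \matrix_(i,j) if i == j then 0 else (if i == 0 then k0 else k1).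

Lemma mul2E (A B : 'M[C]_2) i j : (A *m B) i j = A i 0 * B 0 j + A i 1 * B 1 j.
Proof. by rewrite mxE sum2. Qed.
Lemma pi00 : piZ2 R 0 0 = 1. Proof. by rewrite mxE. Qed.
Lemma pi01 : piZ2 R 0 1 = 0. Proof. by rewrite mxE. Qed.
Lemma pi10 : piZ2 R 1 0 = 0. Proof. by rewrite mxE. Qed.
Lemma pi11 : piZ2 R 1 1 = -1. Proof. by rewrite mxE. Qed.
Lemma Kd00 k0 k1 : Kd k0 k1 0 0 = k0. Proof. by rewrite mxE. Qed.
Lemma Kd01 k0 k1 : Kd k0 k1 0 1 = 0. Proof. by rewrite mxE. Qed.
Lemma Kd10 k0 k1 : Kd k0 k1 1 0 = 0. Proof. by rewrite mxE. Qed.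
Lemma Kd11 k0 k1 : Kd k0 k1 1 1 = k1. Proof. by rewrite mxE. Qed.
Lemma Ka00 k0 k1 : Ka k0 k1 0 0 = 0. Proof. by rewrite mxE. Qed.
Lemma Ka01 k0 k1 : Ka k0 k1 0 1 = k0. Proof. by rewrite mxE. Qed.
Lemma Ka10 k0 k1 : Ka k0 k1 1 0 = k1. Proof. by rewrite mxE. Qed.
Lemma Ka11 k0 k1 : Ka k0 k1 1 1 = 0. Proof. by rewrite mxE. Qed.
Lemma trmxcE (K : 'M[C]_2) i j : (map_mx conjc K)^T i j = conjc (K j i).
Proof. by rewrite !mxE. Qed.
Definition entE := (pi00, pi01, pi10, pi11, Kd00, Kd01, Kd10, Kd11, Ka00, Ka01, Ka10, Ka11).

Lemma kraus_Z2d k0 k1 : Z2_invariant (kraus (Kd k0 k1)).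
Proof.
move=> X; apply/matrixP => i j.
case: (ord2 i) => ->; case: (ord2 j) => ->;
rewrite /kraus !mul2E ?trmxcE ?mul2E ?entE; ring.
Qed.
Lemma kraus_Z2a k0 k1 : Z2_invariant (kraus (Ka k0 k1)).
Proof.
move=> X; apply/matrixP => i j.
case: (ord2 i) => ->; case: (ord2 j) => ->;
rewrite /kraus !mul2E ?trmxcE ?mul2E ?entE; ring.
Qed.

Lemma normc_ge0 (z : C) : 0 <= normc z.
Proof. case: z => a b /=; exact: sqrtr_ge0. Qed.
Lemma e10 : ((1 : 'I_2) == 0) = false. Proof. by []. Qed.
Lemma e01 : ((0 : 'I_2) == 1) = false. Proof. by []. Qed.
Lemma psd_diag (X : 'M[C]_2) : psd X -> 0 <= X 0 0 /\ 0 <= X 1 1.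
Proof.
rewrite /psd psdFE => H; split.
- have := H (fun i => (i == 0)%:R). rewrite !sum2 e10 eqxx conjc1 conjc0.
  by rewrite !mul0r !mulr0 ?add0r ?addr0 mul1r mulr1.
- have := H (fun i => (i == 1)%:R). rewrite !sum2 e01 eqxx conjc1 conjc0.
  by rewrite !mul0r !mulr0 ?add0r ?addr0 mul1r mulr1.
Qed.
Lemma tn_aux (X : 'M[C]_2) (k0 k1 : C) : psd X -> normc k0 <= 1 -> normc k1 <= 1 ->
  0 <= (1 - k0 * conjc k0) * X 0 0 + (1 - k1 * conjc k1) * X 1 1.
Proof.
move=> /psd_diag [h0 h1] n0 n1.
rewrite !mulcJn -!(rmorph1 (real_complex R)) -!rmorphB.
have g0 := normc_ge0 k0; have g1 := normc_ge0 k1.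
apply: addr_ge0; apply: mulr_ge0 => //; rewrite ler0c subr_ge0; nra.
Qed.
Lemma kraus_tnd k0 k1 : normc k0 <= 1 -> normc k1 <= 1 -> trace_nonincreasing (kraus (Kd k0 k1)).
Proof.
move=> n0 n1 X hX. rewrite -subr_ge0.
have -> : \tr X - \tr (kraus (Kd k0 k1) X) = (1 - k0 * conjc k0) * X 0 0 + (1 - k1 * conjc k1) * X 1 1.
  rewrite /mxtrace !sum2 /kraus !mul2E ?trmxcE ?mul2E ?entE; ring.
exact: tn_aux.
Qed.
Lemma kraus_tna k0 k1 : normc k0 <= 1 -> normc k1 <= 1 -> trace_nonincreasing (kraus (Ka k0 k1)).
Proof.
move=> n0 n1 X hX. rewrite -subr_ge0.
have -> : \tr X - \tr (kraus (Ka k0 k1) X) = (1 - k1 * conjc k1) * X 0 0 + (1 - k0 * conjc k0) * X 1 1.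
  rewrite /mxtrace !sum2 /kraus !mul2E ?trmxcE ?mul2E ?entE; ring.
exact: tn_aux.
Qed.
Lemma cjN (x : C) : conjc (- x) = - conjc x.
Proof. exact: raddfN. Qed.
Lemma cjR (x : R) : conjc (x%:C) = x%:C.
Proof. exact: conjc_real. Qed.

Lemma rcD (x y : R) : (x + y)%:C = x%:C + y%:C. Proof. exact: rmorphD. Qed.
Lemma rcB (x y : R) : (x - y)%:C = x%:C - y%:C. Proof. exact: rmorphB. Qed.
Lemma rcM (x y : R) : (x * y)%:C = x%:C * y%:C. Proof. exact: rmorphM. Qed.
Lemma rcX (x : R) n : (x ^+ n)%:C = x%:C ^+ n. Proof. exact: rmorphXn. Qed.
Lemma rcn n : (n%:R : R)%:C = n%:R. Proof. exact: rmorph_nat. Qed.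
Lemma key (a b c d N01 N10 M01 M10 : C) (x y u v p0 p1 q0 q1 lam : R) :
 a * conjc a - x%:C = 0 -> b * conjc b - y%:C = 0 -> c * conjc c - u%:C = 0 -> d * conjc d - v%:C = 0 ->
 a * conjc b * N01 + b * conjc a * M01 - lam%:C * (c * conjc d) = 0 ->
 a * conjc b * N10 + b * conjc a * M10 - lam%:C * (d * conjc c) = 0 ->
 (forall s1 t1 s2 t2 : C, 0 <= conjc s1 * s1 * p0%:C + conjc s2 * s2 * p1%:C + conjc t2 * t2 * q0%:C
    + conjc t1 * t1 * q1%:C + conjc s1 * t1 * N01 + conjc t1 * s1 * M10 + conjc s2 * t2 * N10
    + conjc t2 * s2 * M01) ->
 forall g1 h1 g2 h2 : R, g2 * h2 = g1 * h1 ->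
 0 <= g1^+2 * x * v * p0 + g2^+2 * x * u * p1 + h2^+2 * y * v * q0 + h1^+2 * y * u * q1
      - 2 * (g1 * h1) * lam * u * v.
Proof.
move=> ea eb ec ed L1 L2 H g1 h1 g2 h2 hg.
have hgC : g2%:C * h2%:C - g1%:C * h1%:C = 0.
  by rewrite -!rmorphM hg subrr.
pose s1 := conjc a * conjc d * g1%:C.
pose t1 := - (conjc b * conjc c) * h1%:C.
pose s2 := conjc a * conjc c * g2%:C.
pose t2 := - (conjc b * conjc d) * h2%:C.
have h := H s1 t1 s2 t2.
rewrite -ler0c; apply: (le_trans h); rewrite le_eqVlt; apply/orP; left; apply/eqP.
rewrite /s1 /t1 /s2 /t2 ?cjM ?cjN ?cjM ?conjcK ?cjR.
rewrite !(rcB, rcD, rcM, rcX, rcn).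
move/eqP: ea; rewrite subr_eq0 => /eqP <-.
move/eqP: eb; rewrite subr_eq0 => /eqP <-.
move/eqP: ec; rewrite subr_eq0 => /eqP <-.
move/eqP: ed; rewrite subr_eq0 => /eqP <-.
apply/eqP; rewrite -subr_eq0; apply/eqP.
transitivity (- (g1%:C * h1%:C) * (conjc c * d) * (a * conjc b * N01 + b * conjc a * M01 - lam%:C * (c * conjc d))
  - (g1%:C * h1%:C) * (c * conjc d) * (a * conjc b * N10 + b * conjc a * M10 - lam%:C * (d * conjc c))
  - (g2%:C * h2%:C - g1%:C * h1%:C) * ((conjc c * d) * b * conjc a * M01 + (c * conjc d) * a * conjc b * N10)).
  ring.
rewrite L1 L2 hgC. ring.
Qed.
Lemma quad (A B : R) : 0 <= A -> (forall t, 0 <= t^+2 * A + B - t * (A + B)) -> A = B.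
Proof.
move=> hA H.
pose t := 1 - (A - B) / (A + 1).
have hk : A + 1 != 0 by rewrite gt_eqF // ltr_wpDl.
have e : (A - B)^+2 = - (t^+2 * A + B - t * (A + B)) * (A + 1)^+2.
  rewrite /t; field. done.
have h1 := H t.
have h2 : (A - B)^+2 <= 0.
  rewrite e. rewrite mulNr oppr_le0. apply: mulr_ge0 => //. exact: sqr_ge0.
have : (A - B)^+2 = 0 by apply/le_anti; rewrite h2 sqr_ge0.
by move/eqP; rewrite sqrf_eq0 subr_eq0 => /eqP.
Qed.
Lemma final (x y u v p0 p1 q0 q1 lam : R) :
  0 <= x -> 0 <= y -> 0 <= u -> 0 <= v -> x + y = 1 -> u + v = 1 ->
  0 <= p0 -> 0 <= p1 -> 0 <= q0 -> 0 <= q1 -> p0 + p1 <= 1 -> q0 + q1 <= 1 ->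
  x * p0 + y * q0 = lam * u -> x * p1 + y * q1 = lam * v ->
  (forall t : R, 0 <= t^+2 * (x * v * p0 + x * u * p1) + (y * v * q0 + y * u * q1) - 2 * t * lam * u * v) ->
  (forall t : R, 0 <= t^+2 * (x * v * p0 + y * v * q0) + (x * u * p1 + y * u * q1) - 2 * t * lam * u * v) ->
  2 * Num.min x y < 2 * Num.min u v ->
  lam <= 2 * Num.min x y / (2 * Num.min u v).
Proof.
move=> hx hy hu hv sxy suv hp0 hp1 hq0 hq1 tp tq e0 e1 T1 T2 hlt.
have e2 : 2 * lam * u * v = v * (x * p0 + y * q0) + u * (x * p1 + y * q1).
  rewrite e0 e1; ring.
have E1 : x * v * p0 + x * u * p1 = y * v * q0 + y * u * q1.
  apply: quad; first by rewrite addr_ge0 // !mulr_ge0.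
  move=> t; have := T1 t.
  have -> : 2 * t * lam * u * v = t * (2 * lam * u * v) by ring.
  rewrite e2. congr (_ <= _); ring.
have E2 : x * v * p0 + y * v * q0 = x * u * p1 + y * u * q1.
  apply: quad; first by rewrite addr_ge0 // !mulr_ge0.
  move=> t; have := T2 t.
  have -> : 2 * t * lam * u * v = t * (2 * lam * u * v) by ring.
  rewrite e2. congr (_ <= _); ring.
have F1 : x * v * p0 = y * u * q1 by lra.
have F2 : x * u * p1 = y * v * q0 by lra.
have hm : 0 < Num.min u v.
  have : 0 <= Num.min x y by rewrite le_min hx hy.
  lra.
rewrite ler_pdivlMr; last by lra.
have cp : forall m a b : R, 0 < m -> m * a <= m * b -> a <= b.
  by move=> m a b hm0; rewrite ler_pM2l.
have [hxy|hxy] := lerP x y.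
- rewrite (min_l hxy) in hlt *. have [huv|huv] := lerP u v.
  + rewrite (min_l huv) in hlt hm *.
    have h : y * q0 <= x * p1.
      apply: (cp v); first lra.
      have hd : 0 <= v - u by lra. have := mulr_ge0 (mulr_ge0 hx hp1) hd. nra.
    nra.
  + rewrite (min_r (ltW huv)) in hlt hm *.
    have h : y * q1 <= x * p0.
      apply: (cp v); first lra.
      have hd : 0 <= u - v by lra. have := mulr_ge0 (mulr_ge0 hy hq1) hd. nra.
    nra.
- rewrite (min_r (ltW hxy)) in hlt *. have [huv|huv] := lerP u v.
  + rewrite (min_l huv) in hlt hm *.
    have h : x * p0 <= y * q1.
      apply: (cp u); first lra.
      have hd : 0 <= v - u by lra. have := mulr_ge0 (mulr_ge0 hx hp0) hd. nra.
    nra.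
  + rewrite (min_r (ltW huv)) in hlt hm *.
    have h : x * p1 <= y * q0.
      apply: (cp v); first lra.
      have hd : 0 <= u - v by lra. have := mulr_ge0 (mulr_ge0 hx hp1) hd. nra.
    nra.
Qed.
End S.

Section U.
Variable R : rcfType.
Local Notation C := R[i].
Lemma negz (z : C) : z = - z -> z = 0.
Proof.
move=> h. have: z *+ 2 = 0 by rewrite mulr2n {2}h subrr.
by move/eqP; rewrite mulrn_eq0 /= => /eqP.
Qed.
Lemma negz' (z : C) : - z = z -> z = 0.
Proof. by move=> h; apply: negz; rewrite h. Qed.
Lemma pc00 (M : 'M[C]_2) : (piZ2 R *m M *m piZ2 R) 0 0 = M 0 0.
Proof. rewrite !mul2E !entE; ring. Qed.
Lemma pc01 (M : 'M[C]_2) : (piZ2 R *m M *m piZ2 R) 0 1 = - M 0 1.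
Proof. rewrite !mul2E !entE; ring. Qed.
Lemma pc10 (M : 'M[C]_2) : (piZ2 R *m M *m piZ2 R) 1 0 = - M 1 0.
Proof. rewrite !mul2E !entE; ring. Qed.
Lemma pc11 (M : 'M[C]_2) : (piZ2 R *m M *m piZ2 R) 1 1 = M 1 1.
Proof. rewrite !mul2E !entE; ring. Qed.
Lemma pd00 : piZ2 R *m delta_mx 0 0 *m piZ2 R = delta_mx 0 0.
Proof.
apply/matrixP => i j; case: (ord2 i) => ->; case: (ord2 j) => ->;
rewrite !mul2E !entE !mxE ?eqxx ?e01 ?e10 /=; ring.
Qed.
Lemma pd11 : piZ2 R *m delta_mx 1 1 *m piZ2 R = delta_mx 1 1.
Proof.
apply/matrixP => i j; case: (ord2 i) => ->; case: (ord2 j) => ->;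
rewrite !mul2E !entE !mxE ?eqxx ?e01 ?e10 /=; ring.
Qed.
Lemma pd01 : piZ2 R *m delta_mx 0 1 *m piZ2 R = - delta_mx 0 1.
Proof.
apply/matrixP => i j; case: (ord2 i) => ->; case: (ord2 j) => ->;
rewrite !mul2E !entE !mxE ?eqxx ?e01 ?e10 /=; ring.
Qed.
Lemma pd10 : piZ2 R *m delta_mx 1 0 *m piZ2 R = - delta_mx 1 0.
Proof.
apply/matrixP => i j; case: (ord2 i) => ->; case: (ord2 j) => ->;
rewrite !mul2E !entE !mxE ?eqxx ?e01 ?e10 /=; ring.
Qed.

Section E.
Variable E : {linear 'M[C]_2 -> 'M[C]_2}.
Hypothesis hZ : Z2_invariant E.
Local Notation D i j := (E (delta_mx i j)).
Lemma zD00 : D 0 0 0 1 = 0 /\ D 0 0 1 0 = 0.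
Proof.
have h := hZ (delta_mx 0 0). rewrite pd00 in h. split; apply: negz.
- by have := congr1 (fun M : 'M[C]_2 => M 0 1) h; rewrite pc01.
- by have := congr1 (fun M : 'M[C]_2 => M 1 0) h; rewrite pc10.
Qed.
Lemma zD11 : D 1 1 0 1 = 0 /\ D 1 1 1 0 = 0.
Proof.
have h := hZ (delta_mx 1 1). rewrite pd11 in h. split; apply: negz.
- by have := congr1 (fun M : 'M[C]_2 => M 0 1) h; rewrite pc01.
- by have := congr1 (fun M : 'M[C]_2 => M 1 0) h; rewrite pc10.
Qed.
Lemma zD01 : D 0 1 0 0 = 0 /\ D 0 1 1 1 = 0.
Proof.
have h := hZ (delta_mx 0 1). rewrite pd01 linearN in h. split; apply: negz'.
- by have := congr1 (fun M : 'M[C]_2 => M 0 0) h; rewrite pc00 mxE.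
- by have := congr1 (fun M : 'M[C]_2 => M 1 1) h; rewrite pc11 mxE.
Qed.
Lemma zD10 : D 1 0 0 0 = 0 /\ D 1 0 1 1 = 0.
Proof.
have h := hZ (delta_mx 1 0). rewrite pd10 linearN in h. split; apply: negz'.
- by have := congr1 (fun M : 'M[C]_2 => M 0 0) h; rewrite pc00 mxE.
- by have := congr1 (fun M : 'M[C]_2 => M 1 1) h; rewrite pc11 mxE.
Qed.
End E.
Lemma Eexp (E : {linear 'M[C]_2 -> 'M[C]_2}) (M : 'M[C]_2) k l :
  E M k l = M 0 0 * E (delta_mx 0 0) k l + M 0 1 * E (delta_mx 0 1) k l
          + M 1 0 * E (delta_mx 1 0) k l + M 1 1 * E (delta_mx 1 1) k l.
Proof.
rewrite {1}(matrix_sum_delta M) !sum2 !linearD !linearZ /= !mxE; ring.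
Qed.
Lemma projE (psi : 'cV[C]_2) i j : proj psi i j = psi i 0 * conjc (psi j 0).
Proof. by rewrite /proj mxE big_ord1 !mxE. Qed.
Definition X0 (p q : ('I_2 * 'I_2)%type) : C := ((p.2 == p.1) && (q.2 == q.1))%:R.
Lemma X0psd : psdF X0.
Proof.
rewrite psdFE => v. rewrite dsum !sum2 /X0 /= ?eqxx ?e01 ?e10 /=.
apply: (le_trans (mulcJ_ge0 (v (0,0) + v (1,1)))).
rewrite le_eqVlt; apply/orP; left; apply/eqP; rewrite cjD; ring.
Qed.
Lemma amplX0 (E : {linear 'M[C]_2 -> 'M[C]_2}) i k j l :
  ampl E X0 (i,k) (j,l) = E (delta_mx i j) k l.
Proof. rewrite /ampl; congr (E _ _ _); apply/matrixP => k' l'; by rewrite !mxE. Qed.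
Definition vec4 (s1 t1 s2 t2 : C) (p : ('I_2 * 'I_2)%type) : C :=
  if p.1 == 0 then (if p.2 == 0 then s1 else s2) else (if p.2 == 0 then t2 else t1).
Lemma v4E s1 t1 s2 t2 : (vec4 s1 t1 s2 t2 (0,0) = s1) * (vec4 s1 t1 s2 t2 (0,1) = s2)
  * (vec4 s1 t1 s2 t2 (1,0) = t2) * (vec4 s1 t1 s2 t2 (1,1) = t1).
Proof. by []. Qed.
Lemma Hraw (E : {linear 'M[C]_2 -> 'M[C]_2}) : Z2_invariant E -> completely_positive E ->
  forall s1 t1 s2 t2 : C,
  0 <= conjc s1 * s1 * E (delta_mx 0 0) 0 0 + conjc s2 * s2 * E (delta_mx 0 0) 1 1
     + conjc t2 * t2 * E (delta_mx 1 1) 0 0 + conjc t1 * t1 * E (delta_mx 1 1) 1 1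
     + conjc s1 * t1 * E (delta_mx 0 1) 0 1 + conjc t1 * s1 * E (delta_mx 1 0) 1 0
     + conjc s2 * t2 * E (delta_mx 0 1) 1 0 + conjc t2 * s2 * E (delta_mx 1 0) 0 1.
Proof.
move=> hZ hCP s1 t1 s2 t2.
have := hCP 2 X0 X0psd; rewrite psdFE => /(_ (vec4 s1 t1 s2 t2)).
rewrite dsum !sum2 !amplX0 !v4E.
case: (zD00 hZ) => -> ->; case: (zD11 hZ) => -> ->.
case: (zD01 hZ) => -> ->; case: (zD10 hZ) => -> ->.
move=> h; apply: (le_trans h); rewrite le_eqVlt; apply/orP; left; apply/eqP; ring.
Qed.


Lemma ge0R (z : C) : 0 <= z -> z = (complex.Re z)%:C.
Proof. by case: z => r i /ger0_Im /= ->. Qed.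
Lemma psd_d00 : psd (delta_mx 0 0 : 'M[C]_2).
Proof.
rewrite /psd psdFE => v; rewrite !sum2 !mxE ?eqxx ?e01 ?e10 /=.
apply: (le_trans (mulcJ_ge0 (v 0))).
rewrite le_eqVlt; apply/orP; left; apply/eqP; ring.
Qed.
Lemma psd_d11 : psd (delta_mx 1 1 : 'M[C]_2).
Proof.
rewrite /psd psdFE => v; rewrite !sum2 !mxE ?eqxx ?e01 ?e10 /=.
apply: (le_trans (mulcJ_ge0 (v 1))).
rewrite le_eqVlt; apply/orP; left; apply/eqP; ring.
Qed.
Lemma tr_d00 : \tr (delta_mx 0 0 : 'M[C]_2) = 1.
Proof. by rewrite /mxtrace sum2 !mxE ?eqxx ?e01 ?e10 /= addr0. Qed.
Lemma tr_d11 : \tr (delta_mx 1 1 : 'M[C]_2) = 1.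
Proof. by rewrite /mxtrace sum2 !mxE ?eqxx ?e01 ?e10 /= add0r. Qed.

Lemma mulcJn0 (z : C) : z * conjc z - (normc z ^+ 2)%:C = 0.
Proof. by rewrite mulcJn subrr. Qed.
Lemma le_eqr (a b c : R) : a <= b -> b = c -> a <= c.
Proof. by move=> h <-. Qed.
Lemma upper (psi phi : 'cV[C]_2) (lam : R) (E : {linear 'M[C]_2 -> 'M[C]_2}) :
  pure_state psi -> pure_state phi -> coh psi < coh phi -> Z2_operation E ->
  E (proj psi) = lam%:C *: proj phi -> lam <= coh psi / coh phi.
Proof.
move=> pp pf hlt [hCP hTN hZ] hE.
have H := Hraw hZ hCP.
have g00 : 0 <= E (delta_mx 0 0) 0 0.
  by have := H 1 0 0 0; rewrite conjc1 conjc0 !(mul0r, mulr0, addr0, add0r, mul1r, mulr1).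
have g01 : 0 <= E (delta_mx 0 0) 1 1.
  by have := H 0 0 1 0; rewrite conjc1 conjc0 !(mul0r, mulr0, addr0, add0r, mul1r, mulr1).
have g10 : 0 <= E (delta_mx 1 1) 0 0.
  by have := H 0 0 0 1; rewrite conjc1 conjc0 !(mul0r, mulr0, addr0, add0r, mul1r, mulr1).
have g11 : 0 <= E (delta_mx 1 1) 1 1.
  by have := H 0 1 0 0; rewrite conjc1 conjc0 !(mul0r, mulr0, addr0, add0r, mul1r, mulr1).
set p0 := complex.Re (E (delta_mx 0 0) 0 0). set p1 := complex.Re (E (delta_mx 0 0) 1 1).
set q0 := complex.Re (E (delta_mx 1 1) 0 0). set q1 := complex.Re (E (delta_mx 1 1) 1 1).
have ep0 := ge0R g00. have ep1 := ge0R g01. have eq0 := ge0R g10. have eq1 := ge0R g11.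
rewrite -/p0 in ep0. rewrite -/p1 in ep1. rewrite -/q0 in eq0. rewrite -/q1 in eq1.
have hp0 : 0 <= p0 by rewrite -ler0c -ep0.
have hp1 : 0 <= p1 by rewrite -ler0c -ep1.
have hq0 : 0 <= q0 by rewrite -ler0c -eq0.
have hq1 : 0 <= q1 by rewrite -ler0c -eq1.
have tp : p0 + p1 <= 1.
  have := hTN _ psd_d00; rewrite tr_d00 /mxtrace sum2 ep0 ep1 -rcD.
  by rewrite -[X in _ <= X]/((1:R)%:C) lecR.
have tq : q0 + q1 <= 1.
  have := hTN _ psd_d11; rewrite tr_d11 /mxtrace sum2 eq0 eq1 -rcD.
  by rewrite -[X in _ <= X]/((1:R)%:C) lecR.
have he : forall k l, E (proj psi) k l = lam%:C * (phi k 0 * conjc (phi l 0)).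
  by move=> k l; rewrite hE mxE projE.
have e0 : normc (psi 0 0) ^+ 2 * p0 + normc (psi 1 0) ^+ 2 * q0 = lam * normc (phi 0 0) ^+ 2.
  move: (he 0 0); rewrite Eexp !projE.
  case: (zD01 hZ) => -> _; case: (zD10 hZ) => -> _.
  rewrite ep0 eq0 !mulcJn !(mulr0, addr0, add0r) -!rcM -!rcD.
  by move/complexI.
have e1 : normc (psi 0 0) ^+ 2 * p1 + normc (psi 1 0) ^+ 2 * q1 = lam * normc (phi 1 0) ^+ 2.
  move: (he 1 1); rewrite Eexp !projE.
  case: (zD01 hZ) => _ ->; case: (zD10 hZ) => _ ->.
  rewrite ep1 eq1 !mulcJn !(mulr0, addr0, add0r) -!rcM -!rcD.
  by move/complexI.
have L1 : psi 0 0 * conjc (psi 1 0) * E (delta_mx 0 1) 0 1 + psi 1 0 * conjc (psi 0 0) * E (delta_mx 1 0) 0 1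
   - lam%:C * (phi 0 0 * conjc (phi 1 0)) = 0.
  move: (he 0 1); rewrite Eexp !projE.
  case: (zD00 hZ) => -> _; case: (zD11 hZ) => -> _.
  move=> h; rewrite -h; ring.
have L2 : psi 0 0 * conjc (psi 1 0) * E (delta_mx 0 1) 1 0 + psi 1 0 * conjc (psi 0 0) * E (delta_mx 1 0) 1 0
   - lam%:C * (phi 1 0 * conjc (phi 0 0)) = 0.
  move: (he 1 0); rewrite Eexp !projE.
  case: (zD00 hZ) => _ ->; case: (zD11 hZ) => _ ->.
  move=> h; rewrite -h; ring.
have HH : forall s1 t1 s2 t2 : C, 0 <= conjc s1 * s1 * p0%:C + conjc s2 * s2 * p1%:C + conjc t2 * t2 * q0%:C
    + conjc t1 * t1 * q1%:C + conjc s1 * t1 * E (delta_mx 0 1) 0 1 + conjc t1 * s1 * E (delta_mx 1 0) 1 0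
    + conjc s2 * t2 * E (delta_mx 0 1) 1 0 + conjc t2 * s2 * E (delta_mx 1 0) 0 1.
  by move=> s1 t1 s2 t2; rewrite -ep0 -ep1 -eq0 -eq1; apply: H.
have K := key (mulcJn0 _ ) (mulcJn0 _) (mulcJn0 _) (mulcJn0 _) L1 L2 HH.
move: pp pf hlt; rewrite /pure_state /coh => pp pf hlt.
apply: (@final _ _ _ _ _ _ _ _ _ _ _ _ _ _ pp pf hp0 hp1 hq0 hq1 tp tq e0 e1) => //;
  rewrite ?exprn_ge0 ?normc_ge0 //.
- move=> t; apply: (le_eqr (K t 1 t 1 (erefl _))); ring.
- move=> t; apply: (le_eqr (K t 1 1 t (mulrC _ _))); ring.
Qed.
End U.

Section A.
Variable R : rcfType.
Local Notation C := R[i].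
Definition krausL (K : 'M[C]_2) : {linear 'M[C]_2 -> 'M[C]_2} :=
  HB.pack (kraus K) (GRing.isLinear.Build _ _ _ _ (kraus K) (kraus_is_linear K)).
Lemma krausLE K X : krausL K X = kraus K X. Proof. by []. Qed.
Lemma kraus_proj K (psi : 'cV[C]_2) : kraus K (proj psi) = proj (K *m psi).
Proof. by rewrite /kraus /proj map_mxM trmx_mul !mulmxA. Qed.
Lemma proj_scale (m : R) (phi : 'cV[C]_2) : 0 <= m ->
  proj (m%:C *: phi) = (m ^+ 2)%:C *: proj phi.
Proof.
move=> hm; apply/matrixP => i j; rewrite [LHS]projE [RHS]mxE projE !mxE cjM cjR rcX; ring.
Qed.
Lemma normc_real (m : R) : 0 <= m -> normc m%:C = m.
Proof. move=> hm /=. by rewrite expr0n addr0 sqrtr_sqr ger0_norm. Qed.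
Lemma knorm (m : R) (c a : C) : 0 <= m ->
  normc (m%:C * c / a) ^+ 2 = m ^+ 2 * normc c ^+ 2 / normc a ^+ 2.
Proof. move=> hm. by rewrite !normcM normcV normc_real // !exprMn exprVn. Qed.
Lemma divle1 (p q : R) : 0 <= p -> p <= q -> p / q <= 1.
Proof.
move=> hp hpq; have [->|hq] := eqVneq q 0; first by rewrite invr0 mulr0 ler01.
have hq' : 0 < q by rewrite lt_def hq (le_trans hp hpq).
by rewrite ler_pdivrMr // mul1r.
Qed.
Lemma fixk (m c a : C) : (a = 0 -> m = 0) -> m * c / a * a = m * c.
Proof.
move=> h; have [ha|ha] := eqVneq a 0; first by rewrite ha (h ha) !mul0r.
by rewrite divfK.
Qed.

Lemma rcases (x y u v r : R) : 0 <= x -> 0 <= y -> 0 <= u -> 0 <= v -> x + y = 1 -> u + v = 1 ->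
  2 * Num.min x y < 2 * Num.min u v -> r = 2 * Num.min x y / (2 * Num.min u v) ->
  [/\ 0 <= r, (x = 0 -> r = 0), (y = 0 -> r = 0) &
   ((r * u <= x /\ r * v <= y) \/ (r * u <= y /\ r * v <= x))].
Proof.
move=> hx hy hu hv sxy suv hlt hr.
have hm : 0 < Num.min u v.
  have : 0 <= Num.min x y by rewrite le_min hx hy.
  lra.
have hrm : r * Num.min u v = Num.min x y.
  rewrite hr; field; by rewrite gt_eqF.
have hmx : 0 <= Num.min x y by rewrite le_min hx hy.
have r0 : 0 <= r.
  by rewrite hr divr_ge0 // mulr_ge0 // ltW.
have [hxy|hxy] := lerP x y.
- rewrite (min_l hxy) in hlt hrm hmx *. have [huv|huv] := lerP u v.
  + rewrite (min_l huv) in hlt hm hrm *. split => //; [move=> h0; nra | move=> h0; nra | left; split; nra].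
  + rewrite (min_r (ltW huv)) in hlt hm hrm *. split => //; [move=> h0; nra | move=> h0; nra | right; split; nra].
- rewrite (min_r (ltW hxy)) in hlt hrm hmx *. have [huv|huv] := lerP u v.
  + rewrite (min_l huv) in hlt hm hrm *. split => //; [move=> h0; nra | move=> h0; nra | right; split; nra].
  + rewrite (min_r (ltW huv)) in hlt hm hrm *. split => //; [move=> h0; nra | move=> h0; nra | left; split; nra].
Qed.

Lemma ord1' (j : 'I_1) : j = 0. Proof. exact: ord1. Qed.
Lemma nsq1 (k : C) : normc k ^+ 2 <= 1 -> normc k <= 1.
Proof. move=> h; have := normc_ge0 k; nra. Qed.

Lemma achieve (psi phi : 'cV[C]_2) :
  pure_state psi -> pure_state phi -> coh psi < coh phi ->
  achievable psi phi (coh psi / coh phi).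
Proof.
move=> pp pf hlt.
have hx := exprn_ge0 2 (normc_ge0 (psi 0 0)).
have hy := exprn_ge0 2 (normc_ge0 (psi 1 0)).
have hu := exprn_ge0 2 (normc_ge0 (phi 0 0)).
have hv := exprn_ge0 2 (normc_ge0 (phi 1 0)).
have [r0 rx ry hc] := rcases hx hy hu hv pp pf hlt (erefl (coh psi / coh phi)).
set r := coh psi / coh phi in r0 rx ry hc *.
set m := Num.sqrt r.
have hm : 0 <= m := sqrtr_ge0 r.
have hm2 : m ^+ 2 = r := sqr_sqrtr r0.
have hsq : forall z : C, z = 0 -> normc z ^+ 2 = 0.
  by move=> z ->; rewrite normc0 expr0n.
have ha : psi 0 0 = 0 -> m%:C = 0.
  by move/hsq/rx; rewrite /m => ->; rewrite sqrtr0.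
have hb : psi 1 0 = 0 -> m%:C = 0.
  by move/hsq/ry; rewrite /m => ->; rewrite sqrtr0.
case: hc => [[h1 h2]|[h1 h2]].
- exists (krausL (Kd (m%:C * phi 0 0 / psi 0 0) (m%:C * phi 1 0 / psi 1 0))).
  split; first split.
  + exact: kraus_cp.
  + apply: kraus_tnd; apply: nsq1; rewrite knorm // hm2; apply: divle1 => //; exact: mulr_ge0.
  + exact: kraus_Z2d.
  + rewrite krausLE kraus_proj -hm2 -proj_scale //; congr proj.
    apply/matrixP => i j; rewrite (ord1' j).
    case: (ord2 i) => ->; rewrite !mxE sum2 !entE ?mul0r ?add0r ?addr0 fixk //.
- exists (krausL (Ka (m%:C * phi 0 0 / psi 1 0) (m%:C * phi 1 0 / psi 0 0))).
  split; first split.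
  + exact: kraus_cp.
  + apply: kraus_tna; apply: nsq1; rewrite knorm // hm2; apply: divle1 => //; exact: mulr_ge0.
  + exact: kraus_Z2a.
  + rewrite krausLE kraus_proj -hm2 -proj_scale //; congr proj.
    apply/matrixP => i j; rewrite (ord1' j).
    case: (ord2 i) => ->; rewrite !mxE sum2 !entE ?mul0r ?add0r ?addr0 fixk //.
Qed.
End A.

Close Scope complex_scope.
Unset Implicit Arguments.

Theorem theorem14 (R : rcfType) (psi phi : 'cV[R[i]]_2) :
  pure_state psi -> pure_state phi -> coh psi < coh phi ->
  is_max_prob psi phi (coh psi / coh phi).
Proof.
move=> pp pf hlt; split; first exact: achieve.
move=> lam [E [hE he]]; exact: (upper pp pf hlt hE he).
Qed.
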